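(* Let $G$ be a graph of order $n$ with no isolated vertices and maximum degree $\Delta$. Then $\gamma_{\rm gr}^t(G) \ge \frac{n}{\Delta}$. Moreover, if $G$ is connected and $\gamma_{\rm gr}^t(G) = \frac{n}{\Delta}$, then $G \cong K_{\Delta,\Delta}$.
   Context: All graphs are finite, simple, without isolated vertices. $N(v)$ denotes the open neighborhood of $v$. A sequence $S=(v_1,\ldots,v_k)$ of distinct vertices of $G$ is a legal (open neighborhood) sequence if $N(v_i)\setminus \bigcup_{j=1}^{i-1} N(v_j)\neq\emptyset$ for every $i\in\{2,\ldots,k\}$. It is a total dominating sequence if moreover the set $\{v_1,\ldots,v_k\}$ is a total dominating set of $G$ (every vertex of $G$ has a neighbor in it). The Grundy total domination number $\gamma_{\rm gr}^t(G)$ is the maximum length of a total dominating sequence of $G$. *)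

(* Defs.v *)
(* Simple graphs: symmetric irreflexive e : rel T on T : finType. *)
From mathcomp Require Import all_boot.
Set Implicit Arguments. Unset Strict Implicit. Unset Printing Implicit Defensive.

Section Graph.
Variables (T : finType) (e : rel T).

Definition nbhd (v : T) : {set T} := [set u | e v u].

Definition maxdeg : nat := \max_(v : T) #|nbhd v|.

Fixpoint legal_from (D : {set T}) (s : seq T) : bool :=
  match s with
  | [::] => true
  | x :: s' => ~~ (nbhd x \subset D) && legal_from (D :|: nbhd x) s'
  end.

(* legal open neighbourhood sequence: distinct vertices, and for i >= 2,
   N(v_i) \ (N(v_1) u ... u N(v_{i-1})) is nonempty *)
Definition legal_seq (s : seq T) : bool :=
  uniq s && match s with [::] => true | x :: s' => legal_from (nbhd x) s' end.

Definition total_dom (s : seq T) : bool := [forall v, has (e v) s].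

Definition tds (s : seq T) : bool := legal_seq s && total_dom s.

(* Grundy total domination number: maximum length of a total dominating
   sequence (lengths are bounded by #|T| since entries are distinct). *)
Definition grundy_tdom : nat :=
  \max_(k < #|T|.+1 | [exists t : k.-tuple T, tds t]) (k : nat).

End Graph.

Definition Kbip (m : nat) : rel ('I_m + 'I_m)%type :=
  fun x y => match x, y with
             | inl _, inr _ | inr _, inl _ => true
             | _, _ => false
             end.

Arguments Kbip m : clear implicits.

Definition graph_iso (T T' : finType) (e : rel T) (e' : rel T') : Prop :=
  exists f : T -> T', bijective f /\ forall u v, e' (f u) (f v) = e u v.

(* Main.v *)
Require Import Defs.
From mathcomp Require Import all_boot.
From mathcomp Require Import zify.
Set Implicit Arguments. Unset Strict Implicit. Unset Printing Implicit Defensive.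

Fixpoint cover (T : finType) (e : rel T) (D : {set T}) (s : seq T) : {set T} :=
  match s with [::] => D | x :: s' => cover e (D :|: nbhd e x) s' end.

Lemma deg_le (T : finType) (e : rel T) x : #|nbhd e x| <= maxdeg e.
Proof. exact: (@leq_bigmax _ (fun v => #|nbhd e v|)). Qed.

Lemma cover_card (T : finType) (e : rel T) s D :
  #|cover e D s| <= #|D| + size s * maxdeg e.
Proof.
elim: s D => [|x s IH] D /=; first by rewrite addn0.
apply: leq_trans (IH _) _; rewrite mulSn addnA leq_add2r.
rewrite cardsU; have := deg_le e x; lia.
Qed.

Lemma cover_mem (T : finType) (e : rel T) s D v :
  v \in cover e D s -> v \in D \/ exists2 x, x \in s & e x v.
Proof.
elim: s D => [|x s IH] D /=; first by left.
move/IH => [| [y ys eyv]].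
  rewrite inE => /orP [vD|]; first by left.
  by rewrite inE => exv; right; exists x => //; rewrite inE eqxx.
by right; exists y => //; rewrite inE ys orbT.
Qed.

Lemma ext (T : finType) (e : rel T) (e_sym : symmetric e)
  (no_iso : forall v : T, exists u, e v u) n :
  forall (D : {set T}) (U : seq T), #|~: D| <= n ->
  (forall x, x \in U -> nbhd e x \subset D) -> uniq U ->
  exists s, [&& legal_from e D s, uniq (U ++ s) & cover e D s == setT].
Proof.
elim: n => [|n IH] D U hn hU hUu;
  (case: (pickP (fun v => v \notin D)) => [v vD | allD]); last first.
- exists [::]; rewrite /= cats0 hUu /=; apply/eqP/setP => w.
  by rewrite in_setT; have := allD w; rewrite /= => /negbFE.
- have [u euv] := no_iso v.
  have Nu : v \in nbhd e u by rewrite inE e_sym.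
  have nsub : ~~ (nbhd e u \subset D) by apply/subsetPn; exists v.
  have uU : u \notin U by apply/negP => /hU; rewrite (negbTE nsub).
  have [|||s' /and3P [h1 h2 h3]] := IH (D :|: nbhd e u) (u :: U).
  + have : ~: (D :|: nbhd e u) \proper ~: D.
      apply/properP; split; first by rewrite setCS subsetUl.
      exists v; [by rewrite inE | by rewrite !inE negbK -e_sym euv orbT].
    move/proper_card; lia.
  + move=> x; rewrite inE => /orP [/eqP-> | xU]; first exact: subsetUr.
    exact: subset_trans (hU x xU) (subsetUl _ _).
  + by rewrite /= uU hUu.
  exists (u :: s'); rewrite /= nsub h1 h3 andbT /=.
  rewrite -cat1s (perm_uniq (permEl (perm_catCA U [:: u] s'))) andbT; exact: h2.
- exists [::]; rewrite /= cats0 hUu /=; apply/eqP/setP => w.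
  by rewrite in_setT; have := allD w; rewrite /= => /negbFE.
- have : 0 < #|~: D| by apply/card_gt0P; exists v; rewrite inE.
  lia.
Qed.

Lemma tds_le (T : finType) (e : rel T) t : tds e t -> size t <= grundy_tdom e.
Proof.
move=> ht; have ut : uniq t by case/andP: ht => /andP [].
have hs : size t < #|T|.+1 by rewrite ltnS -(card_uniqP ut) max_card.
rewrite /grundy_tdom.
apply: (@leq_bigmax_cond _ _ (fun k : 'I_#|T|.+1 => nat_of_ord k) (Ordinal hs)).
by apply/existsP; exists (in_tuple t).
Qed.

Lemma tdom_cover (T : finType) (e : rel T) (e_sym : symmetric e) D U s :
  cover e D s == setT -> (forall v, v \in D -> exists2 x, x \in U & e x v) ->
  total_dom e (U ++ s).
Proof.
move=> /eqP hc hD; apply/forallP => v.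
have : v \in cover e D s by rewrite hc inE.
case/cover_mem => [/hD [x xU exv] | [y ys eyv]]; apply/hasP.
  by exists x; rewrite ?mem_cat ?xU // e_sym.
by exists y; rewrite ?mem_cat ?ys ?orbT // e_sym.
Qed.

Lemma bound1 (T : finType) (e : rel T) (e_sym : symmetric e)
  (no_iso : forall v : T, exists u, e v u) x :
  exists s : seq T, (size s).+1 <= grundy_tdom e /\
            #|T| <= #|nbhd e x| + size s * maxdeg e.
Proof.
have hU : forall z, z \in [:: x] -> nbhd e z \subset nbhd e x.
  by move=> z; rewrite inE => /eqP ->.
have [s /and3P [h1 h2 h3]] := ext e_sym no_iso (leqnn #|~: nbhd e x|) hU isT.
exists s; split.
  apply: (tds_le (t := x :: s)); apply/andP; split.
    by rewrite /legal_seq h2 h1.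
  rewrite -[x :: s]/([:: x] ++ s).
  apply: (tdom_cover e_sym (U := [:: x]) (D := nbhd e x) h3) => v vN.
  by exists x; rewrite ?inE //; move: vN; rewrite inE.
rewrite -(cardsT T) -(eqP h3); exact: cover_card.
Qed.

Lemma bound2 (T : finType) (e : rel T) (e_sym : symmetric e)
  (no_iso : forall v : T, exists u, e v u) x y :
  ~~ (nbhd e y \subset nbhd e x) ->
  exists s : seq T, (size s).+2 <= grundy_tdom e /\
            #|T| <= #|nbhd e x :|: nbhd e y| + size s * maxdeg e.
Proof.
move=> nsub.
have xy : x != y by apply: contraNneq nsub => ->.
have hU : forall z, z \in [:: x; y] -> nbhd e z \subset nbhd e x :|: nbhd e y.
  by move=> z; rewrite !inE => /orP [] /eqP ->; [exact: subsetUl | exact: subsetUr].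
have uxy : uniq [:: x; y] by rewrite /= inE xy.
have [s /and3P [h1 h2 h3]] := ext e_sym no_iso (leqnn #|~: (nbhd e x :|: nbhd e y)|)
  hU uxy.
exists s; split.
  apply: (tds_le (t := x :: y :: s)); apply/andP; split.
    by rewrite /legal_seq h2 /= nsub h1.
  rewrite -[x :: y :: s]/([:: x; y] ++ s).
  apply: (tdom_cover e_sym (U := [:: x; y]) h3) => v; rewrite inE => /orP [] vN.
    by exists x; rewrite ?inE ?eqxx //; move: vN; rewrite inE.
  by exists y; rewrite ?inE ?eqxx ?orbT //; move: vN; rewrite inE.
rewrite -(cardsT T) -(eqP h3); exact: cover_card.
Qed.

Theorem mainTheorem1 (T : finType) (e : rel T)
  (e_sym : symmetric e) (e_irr : irreflexive e)
  (no_iso : forall v : T, exists u, e v u) :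
  #|T| <= grundy_tdom e * maxdeg e /\
  ((forall u v : T, connect e u v) ->
   grundy_tdom e * maxdeg e = #|T| ->
   graph_iso e (Kbip (maxdeg e))).
Proof.
split.
  case: (pickP (@predT T)) => [x0 _ | none].
    have [s [hs hc]] := bound1 e_sym no_iso x0.
    have := deg_le e x0.
    have : (size s).+1 * maxdeg e <= grundy_tdom e * maxdeg e.
      by rewrite leq_mul2r hs orbT.
    rewrite mulSn; lia.
  by rewrite (eq_card0 none).
move=> conn heq.
have reg : forall x, #|nbhd e x| = maxdeg e.
  move=> x; have [s [hs hc]] := bound1 e_sym no_iso x.
  have := deg_le e x.
  have : (size s).+1 * maxdeg e <= grundy_tdom e * maxdeg e.
    by rewrite leq_mul2r hs orbT.
  rewrite mulSn; lia.
have disj : forall x y, ~~ (nbhd e y \subset nbhd e x) ->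
    #|nbhd e x :&: nbhd e y| = 0.
  move=> x y nsub; have [s [hs hc]] := bound2 e_sym no_iso nsub.
  have : (size s).+2 * maxdeg e <= grundy_tdom e * maxdeg e.
    by rewrite leq_mul2r hs orbT.
  have := subset_leq_card (subsetIl (nbhd e x) (nbhd e y)).
  rewrite !mulSn cardsU !reg in hc *; lia.
have eqN : forall x y z, e x z -> e y z -> nbhd e x = nbhd e y.
  move=> x y z exz eyz; case: (boolP (nbhd e y \subset nbhd e x)) => h.
    by apply/eqP; rewrite eq_sym eqEcard h !reg leqnn.
  have zI : z \in nbhd e x :&: nbhd e y by rewrite !inE exz eyz.
  have /eqP := disj x y h; rewrite cards_eq0 => /eqP I0.
  by rewrite I0 inE in zI.
case: (pickP (@predT T)) => [x0 _ | none]; last first.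
  have nT : forall z : T, False by move=> z; have := none z.
  exists (fun z => False_rect ('I_(maxdeg e) + 'I_(maxdeg e))%type (nT z)).
  split; last by move=> u; case: (nT u).
  apply: inj_card_bij; first by move=> u; case: (nT u).
  have : maxdeg e <= 0 by apply/bigmax_leqP => v _; case: (nT v).
  rewrite card_sum !card_ord; lia.
have [y0 e0] := no_iso x0.
have x0A : x0 \in nbhd e y0 by rewrite inE e_sym.
have y0B : y0 \in nbhd e x0 by rewrite inE.
have hA : forall z, z \in nbhd e y0 -> nbhd e z = nbhd e x0.
  by move=> z; rewrite inE e_sym => ez; exact: eqN ez e0.
have hB : forall z, z \in nbhd e x0 -> nbhd e z = nbhd e y0.
  by move=> z; rewrite inE e_sym => ez; apply: eqN ez _; rewrite e_sym.
have cov : forall z, (z \in nbhd e y0) || (z \in nbhd e x0).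
  have cl : closed e [pred z | (z \in nbhd e y0) || (z \in nbhd e x0)].
    apply: (intro_closed (sym_connect_sym e_sym)) => u w euw.
    have wu : w \in nbhd e u by rewrite inE.
    rewrite !inE /= => /orP [uA|uB]; apply/orP.
      have := hA u; rewrite inE uA => /(_ isT) Nu.
      by right; move: wu; rewrite Nu inE.
    have := hB u; rewrite inE uB => /(_ isT) Nu.
    by left; move: wu; rewrite Nu inE.
  move=> z; have := closed_connect cl (conn x0 z).
  by rewrite !inE /= [e y0 x0]e_sym e0 /= => <-.
have disj' : forall z, z \in nbhd e y0 -> z \notin nbhd e x0.
  move=> z zA; apply/negP => zB.
  have := hA z zA; rewrite hB // => eAB.
  have : x0 \in nbhd e x0 by rewrite -eAB.
  by rewrite inE e_irr.
have cA : #|nbhd e y0| = maxdeg e := reg y0.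
have cB : #|nbhd e x0| = maxdeg e := reg x0.
have enb : forall u v, e u v = (v \in nbhd e u) by move=> u' v'; rewrite inE.
exists (fun z => if z \in nbhd e y0 then inl (cast_ord cA (enum_rank_in x0A z))
                 else inr (cast_ord cB (enum_rank_in y0B z))).
split.
  apply: inj_card_bij.
    move=> u v /=; case: ifP => uA; case: ifP => vA // => -[] /ord_inj h.
      by rewrite -(enum_rankK_in x0A uA) h (enum_rankK_in x0A vA).
    have uB : u \in nbhd e x0 by move: (cov u); rewrite uA.
    have vB : v \in nbhd e x0 by move: (cov v); rewrite vA.
    by rewrite -(enum_rankK_in y0B uB) h (enum_rankK_in y0B vB).
  have nsub : ~~ (nbhd e x0 \subset nbhd e y0).
    by apply/subsetPn; exists y0; rewrite ?inE ?e_irr.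
  have := disj y0 x0 nsub.
  have := max_card (mem (nbhd e y0 :|: nbhd e x0)).
  rewrite card_sum !card_ord cardsU cA cB; lia.
move=> u v; rewrite /Kbip enb.
case: ifP => uA; case: ifP => vA.
- by rewrite (hA u uA) (negbTE (disj' v vA)).
- by rewrite (hA u uA); have := cov v; rewrite vA /= => ->.
- have uB : u \in nbhd e x0 by move: (cov u); rewrite uA.
  by rewrite (hB u uB) vA.
- have uB : u \in nbhd e x0 by move: (cov u); rewrite uA.
  by rewrite (hB u uB) vA.
Qed.
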